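(* Let $n \ge 1$ and $K \ge 1$ be integers and let $M_0, M_1, \dots, M_{K-1}$ be $n \times n$ real matrices with nonnegative entries. For real $\tau > 0$ define $$M(\tau) = (M_0 + \tau I)(M_1 + \tau I)\cdots(M_{K-1} + \tau I),$$ where $I$ is the $n\times n$ identity matrix, and assume that $M(\tau)$ is irreducible and aperiodic (primitive) for every $\tau > 0$. For $\tau>0$ let $v(\tau) \in [0,1]^n$ denote the principal (Perron) eigenvector of $M(\tau)$, i.e. the unique eigenvector of $M(\tau)$ for its spectral radius whose entries are nonnegative and sum to $1$. Then the map $(0,\infty) \ni \tau \mapsto v(\tau) \in [0,1]^n$ (which is real-analytic) extends continuously to $\tau = 0$; that is, the limit $\lim_{\tau \to 0^+} v(\tau)$ exists.
   Context: An $n\times n$ nonnegative matrix is irreducible if its associated directed graph (edge $i\to j$ iff entry $(i,j)>0$) is strongly connected, and aperiodic if in addition the gcd of the lengths of its cycles is $1$. By Perron–Frobenius theory such a matrix has a simple positive real eigenvalue equal to its spectral radius, with an eigenvector having positive entries, unique up to scaling. Note that the unperturbed product $M_0M_1\cdots M_{K-1}$ itself need not be irreducible or aperiodic (it may even be the zero matrix). *)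

(* Defs.v *)
(* real numbers from Stdlib Reals.
   n x n real matrices are functions nat -> nat -> R, only entries with
   indices < n are meaningful; vectors are functions nat -> R. *)
From Stdlib Require Import Reals List Arith.
Open Scope R_scope.

Definition mat := nat -> nat -> R.
Definition vec := nat -> R.

Fixpoint rsum (n : nat) (f : nat -> R) : R :=
  match n with
  | O => 0
  | S k => rsum k f + f k
  end.

Definition idm : mat := fun i j => if Nat.eqb i j then 1 else 0.
Definition madd (A B : mat) : mat := fun i j => A i j + B i j.
Definition mscal (c : R) (A : mat) : mat := fun i j => c * A i j.
Definition mmul (n : nat) (A B : mat) : mat :=
  fun i j => rsum n (fun k => A i k * B k j).
Definition mvmul (n : nat) (A : mat) (x : vec) : vec :=
  fun i => rsum n (fun k => A i k * x k).

Fixpoint mprod (n : nat) (l : list mat) : mat :=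
  match l with
  | nil => idm
  | A :: l' => mmul n A (mprod n l')
  end.

Definition Mtau (n K : nat) (Ms : nat -> mat) (tau : R) : mat :=
  mprod n (map (fun k => madd (Ms k) (mscal tau idm)) (seq 0 K)).

Fixpoint walk (n : nat) (A : mat) (m : nat) (i j : nat) : Prop :=
  match m with
  | O => i = j
  | S m' => exists k, (k < n)%nat /\ 0 < A i k /\ walk n A m' k j
  end.

Definition irreducible (n : nat) (A : mat) : Prop :=
  forall i j, (i < n)%nat -> (j < n)%nat -> exists m, walk n A m i j.

Definition aperiodic (n : nat) (A : mat) : Prop :=
  forall d : nat,
    (forall m i, (i < n)%nat -> (0 < m)%nat -> walk n A m i i -> Nat.divide d m) ->
    d = 1%nat.

(* complex eigenvalue a + i b of A, with eigenvector x + i y <> 0 *)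
Definition is_complex_eigenvalue (n : nat) (A : mat) (a b : R) : Prop :=
  exists x y : vec,
    (exists i, (i < n)%nat /\ (x i <> 0 \/ y i <> 0)) /\
    forall i, (i < n)%nat ->
      mvmul n A x i = a * x i - b * y i /\
      mvmul n A y i = b * x i + a * y i.

Definition is_spectral_radius (n : nat) (A : mat) (r : R) : Prop :=
  (exists a b, is_complex_eigenvalue n A a b /\ sqrt (a * a + b * b) = r) /\
  (forall a b, is_complex_eigenvalue n A a b -> sqrt (a * a + b * b) <= r).

Definition is_perron_vector (n : nat) (A : mat) (v : vec) : Prop :=
  (forall i, (i < n)%nat -> 0 <= v i) /\
  rsum n v = 1 /\
  exists r, is_spectral_radius n A r /\
    forall i, (i < n)%nat -> mvmul n A v i = r * v i.

(* Main.v *)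
Require Import Defs.
From Stdlib Require Import Reals List Arith Lra Lia Classical ClassicalEpsilon.
From mathcomp Require all_boot all_order all_algebra Rstruct polyrcf qe_rcf ordered_qelim zify.
Open Scope R_scope.
Lemma rsum_ext m f g : (forall k, (k < m)%nat -> f k = g k) -> rsum m f = rsum m g.
Proof. induction m; simpl; intros H; auto. rewrite IHm by (intros; apply H; lia). rewrite H by lia; auto. Qed.

Lemma rsum_nonneg m f : (forall k, (k < m)%nat -> 0 <= f k) -> 0 <= rsum m f.
Proof. induction m; simpl; intros H; [lra|]. assert (0 <= f m) by (apply H; lia).
 assert (0 <= rsum m f) by (apply IHm; intros; apply H; lia). lra. Qed.

Lemma rsum_zero_term m f : (forall k, (k < m)%nat -> 0 <= f k) -> rsum m f = 0 ->
  forall k, (k < m)%nat -> f k = 0.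
Proof. induction m; simpl; intros H Hs k Hk; [lia|].
 assert (0 <= f m) by (apply H; lia).
 assert (0 <= rsum m f) by (apply rsum_nonneg; intros; apply H; lia).
 destruct (Nat.eq_dec k m) as [->|]. lra. apply IHm; try lra; try lia. intros; apply H; lia. Qed.

Lemma rsum_le_term m f : (forall k, (k < m)%nat -> 0 <= f k) ->
  forall k, (k < m)%nat -> f k <= rsum m f.
Proof. induction m; simpl; intros H k Hk; [lia|].
 assert (0 <= f m) by (apply H; lia).
 assert (0 <= rsum m f) by (apply rsum_nonneg; intros; apply H; lia).
 destruct (Nat.eq_dec k m) as [->|]. lra. assert (f k <= rsum m f) by (apply IHm; try lia; intros; apply H; lia). lra. Qed.

Lemma rsum_lin m a b f g : rsum m (fun k => a * f k - b * g k) = a * rsum m f - b * rsum m g.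
Proof. induction m; simpl; [ring|]. rewrite IHm; ring. Qed.

Lemma rsum_zero m : rsum m (fun _ => 0) = 0.
Proof. induction m; simpl; [auto| rewrite IHm; ring]. Qed.

Lemma argmax m f : (1 <= m)%nat -> exists j0, (j0 < m)%nat /\ forall j, (j < m)%nat -> f j <= f j0.
Proof. induction m; intros H; [lia|]. destruct m.
 - exists 0%nat; split; [lia|]. intros j Hj; replace j with 0%nat by lia; lra.
 - destruct IHm as [j0 [Hj0 Hm]]; [lia|].
   destruct (Rle_dec (f (S m)) (f j0)).
   + exists j0; split; [lia|]. intros j Hj. destruct (Nat.eq_dec j (S m)) as [->|]; auto. apply Hm; lia.
   + exists (S m); split; [lia|]. intros j Hj. destruct (Nat.eq_dec j (S m)) as [->|]; [lra|].
     assert (f j <= f j0) by (apply Hm; lia). lra.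
Qed.

Section Uniq.
Variables (n : nat) (A : mat).
Hypothesis Anneg : forall i j, (i < n)%nat -> (j < n)%nat -> 0 <= A i j.
Hypothesis Airr : irreducible n A.

Lemma propag (z : vec) mu : (forall i, (i < n)%nat -> 0 <= z i) ->
  (forall i, (i < n)%nat -> mvmul n A z i = mu * z i) ->
  forall m j k, (j < n)%nat -> z j = 0 -> walk n A m j k -> z k = 0.
Proof. intros Hz He m. induction m; simpl; intros j k Hj Hzj W.
 - subst; auto.
 - destruct W as [l [Hl [Hp W]]]. apply (IHm l); auto.
   assert (H0 : mvmul n A z j = 0) by (rewrite He by auto; rewrite Hzj; ring).
   unfold mvmul in H0.
   assert (A j l * z l = 0).
   { apply (rsum_zero_term n (fun k => A j k * z k)); auto.
     intros; apply Rmult_le_pos; auto. }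
   apply Rmult_integral in H. destruct H; lra.
Qed.

Lemma pos_eig (z : vec) mu : (forall i, (i < n)%nat -> 0 <= z i) -> rsum n z = 1 ->
  (forall i, (i < n)%nat -> mvmul n A z i = mu * z i) ->
  forall j, (j < n)%nat -> 0 < z j.
Proof. intros Hz Hs He j Hj. destruct (Rle_lt_or_eq_dec 0 (z j) (Hz j Hj)); auto.
 exfalso. assert (forall k, (k < n)%nat -> z k = 0).
 { intros k Hk. destruct (Airr j k Hj Hk) as [m W]. apply (propag z mu Hz He m j k); auto. }
 rewrite (rsum_ext n z (fun _ => 0)) in Hs by auto. rewrite rsum_zero in Hs. lra.
Qed.

Lemma perron_uniq (v w : vec) : is_perron_vector n A v ->
  (forall i, (i < n)%nat -> 0 <= w i) -> rsum n w = 1 ->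
  (exists rho, forall i, (i < n)%nat -> mvmul n A w i = rho * w i) ->
  forall i, (i < n)%nat -> w i = v i.
Proof.
 intros [Hv [Hsv [r [Hr Hev]]]] Hw Hsw [rho Hew].
 assert (n1 : (1 <= n)%nat).
 { destruct n; [simpl in Hsw; lra| lia]. }
 assert (vpos := pos_eig v r Hv Hsv Hev).
 assert (wpos := pos_eig w rho Hw Hsw Hew).
 assert (Hrho : rho <= r).
 { destruct Hr as [_ Hr]. assert (H := Hr rho 0).
   assert (sqrt (rho * rho + 0 * 0) <= r).
   { apply H. exists w, (fun _ => 0). split.
     - exists 0%nat; split; [lia|]. left. specialize (wpos 0%nat ltac:(lia)). lra.
     - intros i Hi; split.
       + rewrite Hew by auto. ring.
       + unfold mvmul. rewrite (rsum_ext n _ (fun _ => 0)) by (intros; ring).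
         rewrite rsum_zero; ring. }
   replace (rho * rho + 0 * 0) with (Rsqr rho) in H0 by (unfold Rsqr; ring).
   rewrite sqrt_Rsqr_abs in H0. pose proof (Rle_abs rho). lra. }
 destruct (argmax n (fun j => v j / w j) n1) as [j0 [Hj0 Hmax]].
 set (c := v j0 / w j0).
 set (z := fun k => c * w k - 1 * v k).
 assert (Hz : forall k, (k < n)%nat -> 0 <= z k).
 { intros k Hk. unfold z. specialize (Hmax k Hk). simpl in Hmax. fold c in Hmax.
   assert (0 < w k) by auto. unfold Rdiv in Hmax.
   apply (Rmult_le_compat_r (w k)) in Hmax; [|lra].
   rewrite Rmult_assoc, Rinv_l in Hmax by lra. lra. }
 assert (Hcw : c * w j0 = v j0).
 { unfold c. field. specialize (wpos j0 Hj0). lra. }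
 assert (Hzj0 : z j0 = 0) by (unfold z; lra).
 assert (HAz : forall i, (i < n)%nat -> mvmul n A z i = c * rho * w i - r * v i).
 { intros i Hi. unfold mvmul, z.
   rewrite (rsum_ext n _ (fun k => c * (A i k * w k) - 1 * (A i k * v k))) by (intros; ring).
   rewrite rsum_lin. fold (mvmul n A w i). fold (mvmul n A v i).
   rewrite Hew, Hev by auto. ring. }
 assert (rho = r).
 { assert (0 <= mvmul n A z j0).
   { unfold mvmul. apply rsum_nonneg. intros; apply Rmult_le_pos; auto. }
   rewrite HAz in H by auto.
   replace (c * rho * w j0) with (rho * v j0) in H by (rewrite <- Hcw; ring).
   specialize (vpos j0 Hj0). nra. }
 subst rho.
 assert (Hez : forall i, (i < n)%nat -> mvmul n A z i = r * z i).
 { intros i Hi. rewrite HAz by auto. unfold z. ring. }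
 assert (Hz0 : forall k, (k < n)%nat -> z k = 0).
 { intros k Hk. destruct (Airr j0 k Hj0 Hk) as [m W]. apply (propag z r Hz Hez m j0 k); auto. }
 assert (Hc : c = 1).
 { assert (rsum n v = c * rsum n w - 0 * rsum n w).
   { rewrite <- rsum_lin. apply rsum_ext. intros k Hk. specialize (Hz0 k Hk). unfold z in Hz0. lra. }
   rewrite Hsv, Hsw in H. lra. }
 intros i Hi. specialize (Hz0 i Hi). unfold z in Hz0. rewrite Hc in Hz0. lra.
Qed.
End Uniq.

Definition ev_set (n K : nat) (Ms : nat -> mat) (i0 : nat) (tau c : R) : Prop :=
  exists x : vec, (forall k, (k < n)%nat -> 0 <= x k) /\ rsum n x = 1 /\ x i0 < c /\
    exists lam, forall k, (k < n)%nat -> mvmul n (Mtau n K Ms tau) x k = lam * x k.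

Module MC.
Import all_boot all_order all_algebra Rstruct polyrcf qe_rcf ordered_qelim zify.
Import Order.TTheory GRing.Theory Num.Theory.
Local Open Scope ring_scope.

Section Terms.
Variables (n K : nat) (Ms : nat -> mat) (i0 : nat).
Definition trm := GRing.term R.
Definition frm := ord.formula R.

Fixpoint tsum (m : nat) (f : nat -> trm) : trm :=
  match m with O => GRing.Const (0 : R) | S m' => GRing.Add (tsum m' f) (f m') end.
Fixpoint tconj (m : nat) (g : nat -> frm) : frm :=
  match m with O => ord.Bool true | S m' => ord.And (tconj m' g) (g m') end.

Lemma eval_tsum e m f : GRing.eval e (tsum m f) = rsum m (fun k => GRing.eval e (f k)).
Proof. by elim: m => //= m ->. Qed.

Lemma holds_tconj e m g : ord.holds e (tconj m g) <-> (forall k, (k < m)%coq_nat -> ord.holds e (g k)).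
Proof.
elim: m => /= [|m IH]; first by split => // _ k /PeanoNat.Nat.nlt_0_r.
rewrite IH; split.
  move=> [H1 H2] k /PeanoNat.Nat.lt_succ_r /PeanoNat.Nat.le_lteq [hk|->] //; exact: H1.
move=> H; split; last by apply: H; apply: PeanoNat.Nat.lt_succ_diag_r.
by move=> k hk; apply: H; apply: PeanoNat.Nat.lt_lt_succ_r.
Qed.

Definition tA k i j : trm := GRing.Add (GRing.Const (Ms k i j)) (GRing.Mul (GRing.Var _ 0) (GRing.Const (idm i j))).
Fixpoint tmprod (l : list nat) (i j : nat) : trm :=
  match l with
  | nil => GRing.Const (idm i j)
  | k :: l' => tsum n (fun m => GRing.Mul (tA k i m) (tmprod l' m j))
  end.

Lemma rsum_ext' m f g : (forall k, f k = g k) -> rsum m f = rsum m g.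
Proof. by move=> H; elim: m => //= m ->; rewrite H. Qed.

Lemma rsum_ext'' m f g : (forall k, (k < m)%coq_nat -> f k = g k) -> rsum m f = rsum m g.
Proof.
elim: m => //= m IH H.
rewrite (H m (PeanoNat.Nat.lt_succ_diag_r m)) IH //.
by move=> k hk; apply: H; apply: PeanoNat.Nat.lt_lt_succ_r.
Qed.

Lemma eval_tmprod e l i j : GRing.eval e (tmprod l i j) =
  mprod n (List.map (fun k => madd (Ms k) (mscal (nth 0 e 0) idm)) l) i j.
Proof.
elim: l i j => //= k l IH i j.
rewrite eval_tsum /mmul; apply: rsum_ext' => m /=; rewrite IH.
by [].
Qed.

Definition xv k : trm := GRing.Var R (k + 2)%N.
Definition body : frm :=
  ord.And (tconj n (fun k => ord.Le (GRing.Const 0) (xv k)))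
  (ord.And (ord.Equal (tsum n xv) (GRing.Const 1))
  (ord.And (ord.Lt (xv i0) (GRing.Var R 1))
   (tconj n (fun k => ord.Equal (tsum n (fun l => GRing.Mul (tmprod (List.seq 0 K) k l) (xv l)))
                                 (GRing.Mul (GRing.Var R (n + 2)) (xv k)))))).
Definition Phi : frm := foldr (fun i f => ord.Exists i f) body (iota 2 n.+1).

Lemma holds_exists_list e l (f : frm) :
  ord.holds e (foldr (fun i f => ord.Exists i f) f l) <->
  exists e', (forall j, j \notin l -> nth 0 e' j = nth 0 e j) /\ ord.holds e' f.
Proof.
elim: l e => /= [|i l IH] e.
  split; first by move=> H; exists e.
  move=> [e' [Hag Hf]]; apply: (ord.eq_holds _ Hf) => j; exact: Hag.
split.
  move=> [x /IH [e' [Hag Hf]]]; exists e'; split => // j; rewrite in_cons negb_or => /andP[hji hjl].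
  by rewrite Hag // nth_set_nth /= (negPf hji).
move=> [e' [Hag Hf]]; exists (nth 0 e' i); apply/IH; exists e'; split => // j hj.
rewrite nth_set_nth /=; case: eqP => [->|/eqP hji] //.
by apply: Hag; rewrite in_cons negb_or hji.
Qed.

Lemma Phi_sem tau c : (i0 < n)%coq_nat -> ord.holds [:: tau; c] Phi <-> ev_set n K Ms i0 tau c.
Proof.
move=> hi0; rewrite /Phi holds_exists_list; split.
- move=> [e' [Hag]].
  have h0 : nth 0 e' 0 = tau by rewrite Hag // mem_iota.
  have h1 : nth 0 e' 1 = c by rewrite Hag // mem_iota.
  rewrite /body /= !holds_tconj /= => [[Hnn [Hs [Hlt He]]]].
  exists (fun k => nth 0 e' (k + 2)); split; [|split; [|split]].
  + by move=> k hk; apply/RleP; exact: Hnn k hk.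
  + by rewrite eval_tsum in Hs; rewrite -[RHS]Hs.
  + by apply/RltP; rewrite -h1.
  + exists (nth 0 e' (n + 2)) => k hk; have := He k hk.
    rewrite /= eval_tsum /mvmul => H; etransitivity; last exact: H.
    by apply: rsum_ext' => l /=; rewrite eval_tmprod h0.
- move=> [x [Hnn [Hs [Hlt [lam He]]]]].
  pose f := fun j => if j == 0%N then tau else if j == 1%N then c
     else if (j < n + 2)%N then x (j - 2)%N else lam.
  have hx : forall k, nth 0 (mkseq f (n + 3)) (k + 2) = if (k < n)%N then x k else if k == n then lam else 0.
    move=> k; case: (ltnP (k + 2) (n + 3)) => hk.
      rewrite nth_mkseq // /f.
      have -> : (k + 2 == 0)%N = false by lia.
      have -> : (k + 2 == 1)%N = false by lia.
      have -> : (k + 2 - 2)%N = k by lia.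
      rewrite ltn_add2r.
      case: (ltnP k n) => hkn //.
      by have -> : k == n by lia.
    rewrite nth_default ?size_mkseq //.
    have -> : (k < n)%N = false by lia.
    by have -> : (k == n) = false by lia.
  exists (mkseq f (n + 3)); split.
  + move=> j; rewrite mem_iota negb_and -!ltnNge => /orP [hj|hj].
      case: j hj => [|[|j]] // _; rewrite nth_mkseq //; lia.
    rewrite nth_default ?size_mkseq; last by lia.
    by rewrite nth_default //=; lia.
  + rewrite /body /= !holds_tconj /=.
    have hf0 : nth 0 (mkseq f (n + 3)) 0 = tau by rewrite nth_mkseq //; lia.
    have hf1 : nth 0 (mkseq f (n + 3)) 1 = c by rewrite nth_mkseq //; lia.
    have hxk : forall k, (k < n)%coq_nat -> nth 0 (mkseq f (n + 3)) (k + 2) = x k.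
      by move=> k /ssrnat.ltP hk; rewrite hx hk.
    have hl : nth 0 (mkseq f (n + 3)) (n + 2) = lam by rewrite hx ltnn eqxx.
    split; [|split; [|split]].
    * by move=> k hk; rewrite hxk //; apply/RleP; apply: Hnn.
    * rewrite eval_tsum; etransitivity; last exact: Hs.
      by apply: rsum_ext'' => k hk; rewrite /= hxk.
    * by rewrite /= hf1 hxk; [apply/RltP|].
    * move=> k hk; rewrite eval_tsum /= hl hxk //; etransitivity; last exact: (He k hk).
      by apply: rsum_ext'' => l hl'; rewrite /= hxk // eval_tmprod hf0.
Qed.
End Terms.
Section QEv.
Variable F : rcfType.

Lemma poly_ev_sg (p : {poly F}) : exists2 eps : F, 0 < eps &
  forall x y, 0 < x < eps -> 0 < y < eps -> Num.sg p.[x] = Num.sg p.[y].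
Proof.
have [->|pn0] := eqVneq p 0.
  by exists 1 => // x y _ _; rewrite !horner0.
exists (next_root p 0 1); first by apply: next_root_gt.
move=> x y hx hy; apply: (@sgr_neighpr_same _ p 0 1);
  by rewrite /neighpr in_itv /= ?hx ?hy.
Qed.

Lemma term_poly (e : seq F) (t : GRing.term F) : GRing.rterm t ->
  exists p : {poly F}, forall x, GRing.eval (set_nth 0 e 0 x) t = p.[x].
Proof.
elim: t => /=.
- move=> i _; case: i => [|i].
    by exists 'X => x; rewrite hornerX nth_set_nth.
  by exists (nth 0 e i.+1)%:P => x; rewrite hornerC nth_set_nth.

- by move=> c _; exists c%:P => x; rewrite hornerC.
- by move=> k _; exists k%:R%:P => x; rewrite hornerC.
- move=> t1 IH1 t2 IH2 /andP[r1 r2].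
  have [p1 h1] := IH1 r1; have [p2 h2] := IH2 r2.
  by exists (p1 + p2) => x; rewrite hornerD h1 h2.
- move=> t1 IH1 r1; have [p1 h1] := IH1 r1.
  by exists (- p1) => x; rewrite hornerN h1.
- move=> t1 IH1 k r1; have [p1 h1] := IH1 r1.
  by exists (p1 *+ k) => x; rewrite hornerMn h1.
- move=> t1 IH1 t2 IH2 /andP[r1 r2].
  have [p1 h1] := IH1 r1; have [p2 h2] := IH2 r2.
  by exists (p1 * p2) => x; rewrite hornerM h1 h2.
- by [].
- move=> t1 IH1 k r1; have [p1 h1] := IH1 r1.
  by exists (p1 ^+ k) => x; rewrite horner_exp h1.
Qed.

Lemma atom_ev (e : seq F) (t1 t2 : GRing.term F) : GRing.rterm t1 -> GRing.rterm t2 ->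
  exists2 eps : F, 0 < eps & forall x y, 0 < x < eps -> 0 < y < eps ->
    Num.sg (GRing.eval (set_nth 0 e 0 x) t2 - GRing.eval (set_nth 0 e 0 x) t1)
    = Num.sg (GRing.eval (set_nth 0 e 0 y) t2 - GRing.eval (set_nth 0 e 0 y) t1).
Proof.
move=> r1 r2; have [p1 h1] := @term_poly e t1 r1; have [p2 h2] := @term_poly e t2 r2.
have [eps he H] := poly_ev_sg (p2 - p1); exists eps => // x y hx hy.
by rewrite !h1 !h2 -!(hornerN, hornerD); apply: H.
Qed.

Lemma qf_ev (e : seq F) (f : ord.formula F) : ord.qf_form f -> ord.rformula f ->
  exists2 eps : F, 0 < eps & forall x y, 0 < x < eps -> 0 < y < eps ->
    ord.qf_eval (set_nth 0 e 0 x) f = ord.qf_eval (set_nth 0 e 0 y) f.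
Proof.
elim: f => //=.
- by move=> b _ _; exists 1.
- move=> t1 t2 _ /andP[r1 r2]; have [eps he H] := @atom_ev e t1 t2 r1 r2.
  exists eps => // x y hx hy.
  by rewrite eq_sym -subr_eq0 -sgr_eq0 (H x y hx hy) sgr_eq0 subr_eq0 eq_sym.
- move=> t1 t2 _ /andP[r1 r2]; have [eps he H] := @atom_ev e t1 t2 r1 r2.
  exists eps => // x y hx hy.
  by rewrite -subr_gt0 -sgr_cp0 (H x y hx hy) sgr_cp0 subr_gt0.
- move=> t1 t2 _ /andP[r1 r2]; have [eps he H] := @atom_ev e t1 t2 r1 r2.
  exists eps => // x y hx hy.
  by rewrite -subr_ge0 -[0 <= _]negbK -ltNge -sgr_cp0 (H x y hx hy) sgr_cp0 ltNge negbK subr_ge0.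
- move=> f1 IH1 f2 IH2 /andP[q1 q2] /andP[r1 r2].
  have [e1 he1 H1] := IH1 q1 r1; have [e2 he2 H2] := IH2 q2 r2.
  exists (Num.min e1 e2); first by rewrite lt_min he1 he2.
  move=> x y /andP[x0]; rewrite lt_min => /andP[x1 x2] /andP[y0]; rewrite lt_min => /andP[y1 y2].
  by rewrite (H1 x y) ?x0 ?y0 // (H2 x y) ?x0 ?y0.
- move=> f1 IH1 f2 IH2 /andP[q1 q2] /andP[r1 r2].
  have [e1 he1 H1] := IH1 q1 r1; have [e2 he2 H2] := IH2 q2 r2.
  exists (Num.min e1 e2); first by rewrite lt_min he1 he2.
  move=> x y /andP[x0]; rewrite lt_min => /andP[x1 x2] /andP[y0]; rewrite lt_min => /andP[y1 y2].
  by rewrite (H1 x y) ?x0 ?y0 // (H2 x y) ?x0 ?y0.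
- move=> f1 IH1 f2 IH2 /andP[q1 q2] /andP[r1 r2].
  have [e1 he1 H1] := IH1 q1 r1; have [e2 he2 H2] := IH2 q2 r2.
  exists (Num.min e1 e2); first by rewrite lt_min he1 he2.
  move=> x y /andP[x0]; rewrite lt_min => /andP[x1 x2] /andP[y0]; rewrite lt_min => /andP[y1 y2].
  by rewrite (H1 x y) ?x0 ?y0 // (H2 x y) ?x0 ?y0.
- move=> f1 IH1 q1 r1; have [e1 he1 H1] := IH1 q1 r1.
  by exists e1 => // x y hx hy; rewrite (H1 x y).
Qed.

Lemma qe_eventual (e : seq F) (f : ord.formula F) :
  exists2 eps : F, 0 < eps & forall x y, 0 < x < eps -> 0 < y < eps ->
    ord.holds (set_nth 0 e 0 x) f -> ord.holds (set_nth 0 e 0 y) f.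
Proof.
set g := ord.quantifier_elim (@wproj F) (ord.to_rform f).
have /andP[qg rg] := ord.quantifier_elim_wf (@wf_QE_wproj F) (ord.to_rform_rformula f).
have [eps he H] := @qf_ev e _ qg rg.
exists eps => // x y hx hy.
move=> /ord.to_rformP /(ord.quantifier_elim_rformP (@wf_QE_wproj F) (@valid_QE_wproj F) _ (ord.to_rform_rformula f)).
rewrite -/g (H x y hx hy) => /(ord.quantifier_elim_rformP (@wf_QE_wproj F) (@valid_QE_wproj F) _ (ord.to_rform_rformula f)).
by move/ord.to_rformP.
Qed.
End QEv.

Lemma ev_eventual n K Ms i0 c : (i0 < n)%coq_nat -> exists eps, Rlt 0 eps /\
  forall x y, Rlt 0 x -> Rlt x eps -> Rlt 0 y -> Rlt y eps ->
    ev_set n K Ms i0 x c -> ev_set n K Ms i0 y c.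
Proof.
move=> hi; have [eps he H] := @qe_eventual R [:: 0; c] (Phi n K Ms i0).
exists eps; split; first exact/RltP.
move=> x y hx1 hx2 hy1 hy2 /(@Phi_sem n K Ms i0 x c hi) Hx; apply/(@Phi_sem n K Ms i0 y c hi).
by apply: (H x y) => //; apply/andP; split; apply/RltP.
Qed.
End MC.

Lemma Mtau_nn n K Ms (hnonneg : forall k i j, (k < K)%nat -> (i < n)%nat -> (j < n)%nat -> 0 <= Ms k i j)
  tau : 0 <= tau -> forall i j, (i < n)%nat -> (j < n)%nat -> 0 <= Mtau n K Ms tau i j.
Proof.
 intros Ht. unfold Mtau.
 assert (Hl: forall k, In k (seq 0 K) -> (k < K)%nat) by (intros k Hk; apply in_seq in Hk; lia).
 revert Hl. induction (seq 0 K) as [|k l IH]; simpl; intros Hl i j Hi Hj.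
 - unfold idm; destruct (Nat.eqb i j); lra.
 - unfold mmul; apply rsum_nonneg; intros m Hm; apply Rmult_le_pos.
   + unfold madd, mscal, idm. assert (Hk : (k < K)%nat) by (apply Hl; left; auto).
     specialize (hnonneg k i m Hk Hi Hm). destruct (Nat.eqb i m); nra.
   + apply IH; auto.
Qed.

Theorem mainTheorem1 (n K : nat) (Ms : nat -> mat)
  (hn : (1 <= n)%nat) (hK : (1 <= K)%nat)
  (hnonneg : forall k i j, (k < K)%nat -> (i < n)%nat -> (j < n)%nat -> 0 <= Ms k i j)
  (hprim : forall tau, 0 < tau ->
     irreducible n (Mtau n K Ms tau) /\ aperiodic n (Mtau n K Ms tau))
  (v : R -> vec)
  (hv : forall tau, 0 < tau -> is_perron_vector n (Mtau n K Ms tau) (v tau)) :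
  exists L : vec, forall i, (i < n)%nat ->
    forall eps, 0 < eps -> exists delta, 0 < delta /\
      forall tau, 0 < tau -> tau < delta -> Rabs (v tau i - L i) < eps.
Proof.
 assert (Hsem : forall i, (i < n)%nat -> forall tau c, 0 < tau ->
           (ev_set n K Ms i tau c <-> v tau i < c)).
 { intros i Hi tau c Ht. split.
   - intros [x [Hx [Hs [Hlt [lam He]]]]].
     rewrite <- (perron_uniq n (Mtau n K Ms tau) (Mtau_nn n K Ms hnonneg tau ltac:(lra))
                  (proj1 (hprim tau Ht)) (v tau) x (hv tau Ht) Hx Hs (ex_intro _ lam He) i Hi).
     exact Hlt.
   - intros Hlt. destruct (hv tau Ht) as [Hv [Hs [r [_ He]]]].
     exists (v tau). repeat split; auto. exists r; auto. }
 assert (Hb : forall i, (i < n)%nat -> forall tau, 0 < tau -> 0 <= v tau i <= 1).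
 { intros i Hi tau Ht. destruct (hv tau Ht) as [Hv [Hs _]]. split; auto.
   rewrite <- Hs. apply rsum_le_term; auto. }
 assert (Hlim : forall i, exists Li, (i < n)%nat ->
    forall eps, 0 < eps -> exists delta, 0 < delta /\
      forall tau, 0 < tau -> tau < delta -> Rabs (v tau i - Li) < eps).
 { intros i. destruct (lt_dec i n) as [Hi|Hi]; [|exists 0; intros; lia].
   assert (dichot : forall c, (exists d, 0 < d /\ forall tau, 0 < tau -> tau < d -> v tau i < c) \/
                             (exists d, 0 < d /\ forall tau, 0 < tau -> tau < d -> c <= v tau i)).
   { intros c. destruct (MC.ev_eventual n K Ms i c Hi) as [e [He H]].
     destruct (Rlt_le_dec (v (e/2) i) c) as [Hy|Hy].
     - left. exists e; split; auto. intros tau H1 H2. apply (Hsem i Hi tau c H1).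
       apply (H (e/2) tau); try lra. apply (Hsem i Hi (e/2) c); lra.
     - right. exists e; split; auto. intros tau H1 H2.
       destruct (Rlt_le_dec (v tau i) c) as [Hz|Hz]; auto. exfalso.
       assert (ev_set n K Ms i (e/2) c).
       { apply (H tau (e/2)); try lra. apply (Hsem i Hi tau c H1); auto. }
       apply (Hsem i Hi (e/2) c) in H0; lra. }
   set (S := fun c => exists d, 0 < d /\ forall tau, 0 < tau -> tau < d -> c <= v tau i).
   assert (Sbnd : bound S).
   { exists 1. intros c [d [Hd Hc]]. specialize (Hc (d/2) ltac:(lra) ltac:(lra)).
     specialize (Hb i Hi (d/2) ltac:(lra)). lra. }
   assert (S0 : exists c, S c).
   { exists 0. exists 1. split; [lra|]. intros tau H1 _. apply (Hb i Hi tau H1). }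
   destruct (completeness S Sbnd S0) as [L [HL1 HL2]].
   exists L. intros _ eps Heps.
   assert (Ha : exists s, S s /\ L - eps/2 < s).
   { apply NNPP. intros Hn. assert (is_upper_bound S (L - eps/2)).
     { intros s Hs. apply Rnot_lt_le. intros Hlt. apply Hn. exists s; auto. }
     apply HL2 in H. lra. }
   destruct Ha as [s [[d1 [Hd1 Hs1]] Hs2]].
   destruct (dichot (L + eps/2)) as [[d2 [Hd2 H2]]|[d2 [Hd2 H2]]].
   - exists (Rmin d1 d2). split; [apply Rmin_pos; auto|].
     intros tau H1 H3. assert (tau < d1) by (eapply Rlt_le_trans; [exact H3| apply Rmin_l]).
     assert (tau < d2) by (eapply Rlt_le_trans; [exact H3| apply Rmin_r]).
     specialize (Hs1 tau H1 H). specialize (H2 tau H1 H0).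
     apply Rabs_def1; lra.
   - exfalso. assert (S (L + eps/2)) by (exists d2; auto). apply HL1 in H. lra. }
 exists (fun i => proj1_sig (constructive_indefinite_description _ (Hlim i))).
 intros i Hi. exact (proj2_sig (constructive_indefinite_description _ (Hlim i)) Hi).
Qed.
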